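(* Let $G$ be a finite connected groupoid with $G_0=\{e_1,\dots,e_r\}$, $A=\bigoplus_{i=1}^r A_i$ a unital ring with $A_i:=A_{e_i}$ having identity $1_i$, and $\alpha=(A_g,\alpha_g)_{g\in G}$ a unital partial action of $G$ on $A$. The following are equivalent: (i) $A\subset A\star_\alpha G$ is a separable extension; (ii) there exists $a\in C(A)$ (the center of $A$) such that $t_i(a)=1_i$ for all $i=1,\dots,r$.
   Context: A groupoid $G$ is a small category in which every morphism is invertible; $G_0$ is its object set (objects identified with identity morphisms), $s,t$ source and target; $gh$ is defined iff $s(g)=t(h)$; $G(e,f)$ is the set of morphisms from $e$ to $f$; $G$ is connected if $G(e,f)\neq\emptyset$ for all $e,f\in G_0$. A unital partial action of $G$ on $A$ is a family $\alpha=(A_g,\alpha_g)_{g\in G}$ where $A_{t(g)}$ is a two-sided ideal of $A$, $A_g=A1_g$ is a two-sided ideal of $A_{t(g)}$ with $1_g$ a central idempotent of $A$, $\alpha_g:A_{g^{-1}}\to A_g$ a ring isomorphism, such that $\alpha_e=\mathrm{id}_{A_e}$ for $e\in G_0$, $\alpha_h^{-1}(A_{g^{-1}}\cap A_h)\subseteq A_{(gh)^{-1}}$ and $\alpha_g(\alpha_h(x))=\alpha_{gh}(x)$ for $x\in\alpha_h^{-1}(A_{g^{-1}}\cap A_h)$, whenever $s(g)=t(h)$. The partial skew groupoid ring $A\star_\alpha G=\bigoplus_{g\in G}A_g\delta_g$ has multiplication $(a_g\delta_g)(b_h\delta_h)=\alpha_g(\alpha_{g^{-1}}(a_g)b_h)\delta_{gh}$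 if $s(g)=t(h)$ and $0$ otherwise; it is unital with $1=\sum_{e\in G_0}1_e\delta_e$, and $A$ is regarded as a subring via $a\mapsto\sum_{e\in G_0}(a1_e)\delta_e$. Trace maps: $t_{i,j}(a)=\sum_{g\in G(e_i,e_j)}\alpha_g(a1_{g^{-1}})$ and $t_j(a)=\sum_{i=1}^r t_{i,j}(a)$ for $a\in A$. A ring extension $R\subseteq S$ is separable if the multiplication map $S\otimes_R S\to S$ splits as a map of $(S,S)$-bimodules; equivalently there exists $x\in S\otimes_R S$ with $m(x)=1_S$ and $sx=xs$ for all $s\in S$. *)

(* Defs.v *)
From HB Require Import structures.
From mathcomp Require Import all_boot all_order all_algebra.
Set Implicit Arguments. Unset Strict Implicit. Unset Printing Implicit Defensive.
Import GRing.Theory.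
Local Open Scope ring_scope.

(* A finite groupoid: morphisms and objects are finite types; objects are
   identified with their identity morphisms via [idm].  [comp g h] is the
   composite gh (meaningful only when src g = tgt h). *)
Record groupoid := Groupoid {
  mor : finType;
  obj : finType;
  src : mor -> obj;
  tgt : mor -> obj;
  idm : obj -> mor;
  comp : mor -> mor -> mor;
  inv : mor -> mor;
  src_idm : forall e, src (idm e) = e;
  tgt_idm : forall e, tgt (idm e) = e;
  src_comp : forall g h, src g = tgt h -> src (comp g h) = src h;
  tgt_comp : forall g h, src g = tgt h -> tgt (comp g h) = tgt g;
  comp_assoc : forall g h k, src g = tgt h -> src h = tgt k ->
                 comp g (comp h k) = comp (comp g h) k;
  comp_idl : forall g, comp (idm (tgt g)) g = g;
  comp_idr : forall g, comp g (idm (src g)) = g;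
  src_inv : forall g, src (inv g) = tgt g;
  tgt_inv : forall g, tgt (inv g) = src g;
  comp_invl : forall g, comp (inv g) g = idm (src g);
  comp_invr : forall g, comp g (inv g) = idm (tgt g)
}.

Definition connected (G : groupoid) : Prop :=
  forall e f : obj G, exists g : mor G, src g = e /\ tgt g = f.

(* x lies in the ideal A * e (e a central idempotent) *)
Definition in_ideal (A : pzRingType) (e x : A) : Prop := x * e = x.

(* Unital partial action (A_g = A 1_g, alpha_g : A_{g^-1} -> A_g). *)
Record unital_partial_action (G : groupoid) (A : pzRingType)
    (one_ : mor G -> A) (alpha : mor G -> A -> A) : Prop := {
  upa_idem : forall g, one_ g * one_ g = one_ g;
  upa_central : forall g x, one_ g * x = x * one_ g;
  upa_sub : forall g, one_ g * one_ (idm (tgt g)) = one_ g;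
  upa_add : forall g x y, in_ideal (one_ (inv g)) x -> in_ideal (one_ (inv g)) y ->
     alpha g (x + y) = alpha g x + alpha g y;
  upa_mul : forall g x y, in_ideal (one_ (inv g)) x -> in_ideal (one_ (inv g)) y ->
     alpha g (x * y) = alpha g x * alpha g y;
  upa_one : forall g, alpha g (one_ (inv g)) = one_ g;
  upa_into : forall g x, in_ideal (one_ (inv g)) x -> in_ideal (one_ g) (alpha g x);
  upa_inj : forall g x y, in_ideal (one_ (inv g)) x -> in_ideal (one_ (inv g)) y ->
     alpha g x = alpha g y -> x = y;
  upa_surj : forall g y, in_ideal (one_ g) y ->
     exists2 x, in_ideal (one_ (inv g)) x & alpha g x = y;
  upa_id : forall e x, in_ideal (one_ (idm e)) x -> alpha (idm e) x = x;
  upa_comp : forall g h, src g = tgt h -> forall x,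
     in_ideal (one_ (inv h)) x -> in_ideal (one_ (inv g)) (alpha h x) ->
     in_ideal (one_ (inv (comp g h))) x /\ alpha g (alpha h x) = alpha (comp g h) x
}.

(* Elements of A *_alpha G are represented as finite functions g |-> a_g,
   i.e. sum_g a_g delta_g, with a_g in A_g. *)
Definition in_skew (G : groupoid) (A : pzRingType) (one_ : mor G -> A)
  (f : {ffun mor G -> A}) : Prop := forall g, in_ideal (one_ g) (f g).

(* (a_g delta_g)(b_h delta_h) = alpha_g(alpha_{g^-1}(a_g) b_h) delta_{gh} if s(g)=t(h) *)
Definition skew_mul (G : groupoid) (A : pzRingType) (alpha : mor G -> A -> A)
  (f f' : {ffun mor G -> A}) : {ffun mor G -> A} :=
  [ffun k => \sum_(g : mor G) \sum_(h : mor G | (src g == tgt h) && (comp g h == k))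
               alpha g (alpha (inv g) (f g) * f' h)].

(* embedding a |-> sum_e (a 1_e) delta_e *)
Definition skew_emb (G : groupoid) (A : pzRingType) (one_ : mor G -> A) (a : A)
  : {ffun mor G -> A} :=
  [ffun g => if g == idm (src g) then a * one_ g else 0].

Definition balanced (T : zmodType) (inS : T -> Prop) (mul : T -> T -> T)
  (inR : T -> Prop) (M : zmodType) (phi : T -> T -> M) : Prop :=
  [/\ forall u v w, inS u -> inS v -> inS w -> phi (u + v) w = phi u w + phi v w,
      forall u v w, inS u -> inS v -> inS w -> phi u (v + w) = phi u v + phi u w &
      forall u r v, inS u -> inR r -> inS v -> phi (mul u r) v = phi u (mul r v)].

(* Separable extension R ⊆ S: there is x = sum_k x_k ⊗ y_k in S ⊗_R S with
   m(x) = 1 and s x = x s for all s in S.  Equality in S ⊗_R S is expressed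
   through the universal property of the tensor product: two formal sums are
   equal in S ⊗_R S iff every R-balanced biadditive map takes equal values. *)
Definition separable_ext (T : zmodType) (inS : T -> Prop) (mul : T -> T -> T)
  (one : T) (inR : T -> Prop) : Prop :=
  exists (n : nat) (x y : 'I_n -> T),
    [/\ forall k, inS (x k) /\ inS (y k),
        \sum_(k < n) mul (x k) (y k) = one &
        forall s, inS s -> forall (M : zmodType) (phi : T -> T -> M),
          balanced inS mul inR phi ->
          \sum_(k < n) phi (mul s (x k)) (y k) = \sum_(k < n) phi (x k) (mul (y k) s)].

Definition trace_t (G : groupoid) (A : pzRingType) (one_ : mor G -> A)
  (alpha : mor G -> A -> A) (j : obj G) (a : A) : A :=
  \sum_(g : mor G | tgt g == j) alpha g (a * one_ (inv g)).

(* Main.v *)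
Require Import Defs.
From HB Require Import structures.
From mathcomp Require Import all_boot all_order all_algebra.
Set Implicit Arguments. Unset Strict Implicit. Unset Printing Implicit Defensive.
Import GRing.Theory.
Local Open Scope ring_scope.
Local Notation inv := Defs.inv.
Local Notation comp := Defs.comp.
Section Gpd.
Variable G : groupoid.
Implicit Types g h k m : mor G.

Lemma inv_inv g : inv (inv g) = g.
Proof.
rewrite -[LHS]comp_idr !src_inv tgt_inv -comp_invl.
rewrite comp_assoc ?src_inv ?tgt_inv // comp_invl src_inv comp_idl //.
Qed.

Lemma inv_idm e : inv (@idm G e) = @idm G e.
Proof.
have H := comp_idr (inv (@idm G e)); rewrite src_inv tgt_idm in H.
by rewrite comp_invl src_idm in H; rewrite -H.
Qed.

Lemma idm_inj e f : @idm G e = @idm G f -> e = f.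
Proof. by move=> H; rewrite -(src_idm e) H src_idm. Qed.

Lemma comp_idm_eq g h j : src g = tgt h ->
  (comp g h == @idm G j) = (h == inv g) && (tgt g == j).
Proof.
move=> sgh; apply/eqP/andP => [E|[/eqP -> /eqP <-]]; last by rewrite comp_invr.
have tj : tgt g = j by rewrite -(tgt_comp sgh) E tgt_idm.
split; apply/eqP => //.
have : comp (inv g) (comp g h) = h.
  by rewrite comp_assoc ?src_inv ?tgt_inv // comp_invl sgh comp_idl.
by rewrite E => <-; rewrite -tj -(src_inv g) comp_idr.
Qed.

Lemma comp_cancel_l g h : src g = tgt h -> comp (inv g) (comp g h) = h.
Proof. by move=> sgh; rewrite comp_assoc ?src_inv ?tgt_inv // comp_invl sgh comp_idl. Qed.

Lemma comp_cancel_l' g h : tgt g = tgt h -> comp g (comp (inv g) h) = h.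
Proof. move=> sgh; rewrite -{1}(inv_inv g) comp_cancel_l // src_inv //. Qed.

Lemma inv_comp g h : src g = tgt h -> inv (comp g h) = comp (inv h) (inv g).
Proof.
move=> sgh.
have E1 : comp (comp g h) (comp (inv h) (inv g)) = @idm G (tgt (comp g h)).
  rewrite -comp_assoc ?tgt_comp ?src_comp ?tgt_inv ?src_inv //.
  rewrite [comp h _]comp_assoc ?tgt_inv ?src_inv // comp_invr -sgh -(tgt_inv g) comp_idl.
  by rewrite comp_invr.
rewrite -[LHS]comp_idr src_inv -E1 comp_assoc ?src_inv ?tgt_inv ?tgt_comp ?src_comp //.
rewrite comp_invl src_comp //.
have -> : src h = tgt (comp (inv h) (inv g)) by rewrite tgt_comp ?src_inv ?tgt_inv.
by rewrite comp_idl.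
all: by rewrite ?src_inv ?tgt_inv.
Qed.

End Gpd.

Section PA.
Variables (G : groupoid) (A : pzRingType) (o : mor G -> A) (al : mor G -> A -> A).
Hypothesis P : unital_partial_action o al.
Implicit Types g h k m : mor G.
Local Notation I g x := (in_ideal (o g) x).

Lemma oC g x : o g * x = x * o g. Proof. exact: (upa_central P g x). Qed.
Lemma oo g : o g * o g = o g. Proof. exact: (upa_idem P g). Qed.
Lemma I_o g : I g (o g). Proof. exact: oo. Qed.
Lemma I_0 g : I g 0. Proof. by rewrite /in_ideal mul0r. Qed.
Lemma I_add g x y : I g x -> I g y -> I g (x + y).
Proof. by rewrite /in_ideal mulrDl => -> ->. Qed.
Lemma I_mulr g x y : I g y -> I g (x * y).
Proof. by rewrite /in_ideal -mulrA => ->. Qed.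
Lemma I_mull g x y : I g x -> I g (x * y).
Proof. move=> Hx; by rewrite /in_ideal -mulrA -oC mulrA Hx. Qed.
Lemma I_sub g x : I g x -> I (idm (tgt g)) x.
Proof. by rewrite /in_ideal => <-; rewrite -mulrA (upa_sub P). Qed.
Lemma I_oo g h : I g (o g * o h).
Proof. by apply: I_mull; apply: I_o. Qed.
Lemma I_oo' g h : I h (o g * o h).
Proof. by apply: I_mulr; apply: I_o. Qed.

Lemma al_add g x y : I (inv g) x -> I (inv g) y -> al g (x + y) = al g x + al g y.
Proof. exact: (upa_add P). Qed.
Lemma al_mul g x y : I (inv g) x -> I (inv g) y -> al g (x * y) = al g x * al g y.
Proof. exact: (upa_mul P). Qed.
Lemma al_into g x : I (inv g) x -> I g (al g x).
Proof. exact: (upa_into P). Qed.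
Lemma al0 g : al g 0 = 0.
Proof.
have := al_add (I_0 (inv g)) (I_0 (inv g)); rewrite addr0 => E.
have : al g 0 + al g 0 - al g 0 = al g 0 - al g 0 by rewrite -E.
by rewrite addrK subrr.
Qed.
Lemma al_id e x : I (idm e) x -> al (idm e) x = x.
Proof. exact: (upa_id P). Qed.

Lemma al_inv g x : I (inv g) x -> al (inv g) (al g x) = x.
Proof.
move=> Ix.
have s1 : src (inv g) = tgt g by rewrite src_inv.
have Ia : I (inv (inv g)) (al g x) by rewrite inv_inv; apply: al_into.
have [_ ->] := upa_comp P s1 Ix Ia.
rewrite comp_invl al_id //.
by move: (I_sub Ix); rewrite tgt_inv.
Qed.

Lemma al_inv' g x : I g x -> al g (al (inv g) x) = x.
Proof. by move=> Ix; rewrite -{1}(inv_inv g) al_inv // inv_inv. Qed.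

Lemma al_sub g h x : src g = tgt h -> I (inv g) x -> I h x ->
  I (comp g h) (al g x) /\ al g x = al (comp g h) (al (inv h) x).
Proof.
move=> sgh Ig Ih.
have Ih' : I (inv (inv h)) x by rewrite inv_inv.
have E : al h (al (inv h) x) = x by rewrite al_inv'.
have Ix : I (inv h) (al (inv h) x) by apply: al_into.
have Ig' : I (inv g) (al h (al (inv h) x)) by rewrite E.
have [_ E2] := upa_comp P sgh Ix Ig'.
rewrite E in E2; rewrite E2; split => //.
apply: al_into.
by have [] := upa_comp P sgh Ix Ig'.
Qed.

Lemma al_in g h x : src g = tgt h -> I (inv g) x -> I h x -> I (comp g h) (al g x).
Proof. by move=> sgh Ig Ih; have [] := al_sub sgh Ig Ih. Qed.

Lemma key g h : src g = tgt h -> al g (o (inv g) * o h) = o g * o (comp g h).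
Proof.
move=> sgh.
set y := o (inv g) * o h; set z := o g * o (comp g h).
have Iy1 : I (inv g) y by apply: I_oo.
have Iy2 : I h y by apply: I_oo'.
have ay1 : I (comp g h) (al g y) by apply: al_in.
have ay2 : I g (al g y) by apply: al_into.
have az : al g y * z = al g y by rewrite /z mulrA ay2 ay1.
have s2 : src (inv g) = tgt (comp g h) by rewrite src_inv tgt_comp.
have Iz1 : I (inv (inv g)) z by rewrite inv_inv; apply: I_oo.
have Iz2 : I (comp g h) z by apply: I_oo'.
have bz : I (comp (inv g) (comp g h)) (al (inv g) z) by apply: al_in.
rewrite comp_cancel_l // in bz.
have bz2 : I (inv g) (al (inv g) z) by apply: al_into.
have Iz : I g z by rewrite inv_inv in Iz1.
have zE : z = al g (al (inv g) z) by rewrite al_inv'.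
have : z = al g (al (inv g) z * y).
  by rewrite /y mulrA bz2 bz.
rewrite al_mul // -zE => ->.
have zc : z * al g y = al g y * z by rewrite /z -mulrA (oC (comp g h)) mulrA (oC g) -mulrA.
by rewrite zc az.
Qed.

Lemma al_sum g (J : Type) (r : seq J) (Q : pred J) (F : J -> A) :
  (forall i, Q i -> I (inv g) (F i)) ->
  al g (\sum_(i <- r | Q i) F i) = \sum_(i <- r | Q i) al g (F i).
Proof.
move=> HF.
suff : I (inv g) (\sum_(i <- r | Q i) F i) /\ al g (\sum_(i <- r | Q i) F i) = \sum_(i <- r | Q i) al g (F i) by case.
elim/big_rec2: _ => [|i y1 y2 Qi [Iy E]]; first by rewrite al0; split => //; apply: I_0.
split; first by apply: I_add => //; apply: HF.
by rewrite al_add ?E //; apply: HF.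
Qed.

End PA.

Lemma sum_only (I : finType) (R : nmodType) (i0 : I) (F : I -> R) :
  (forall i, i != i0 -> F i = 0) -> \sum_i F i = F i0.
Proof. by move=> H; rewrite (bigD1 i0) //= big1 ?addr0. Qed.

Definition single (G : groupoid) (A : pzRingType) (k : mor G) (d : A) : {ffun mor G -> A} :=
  [ffun k' => if k' == k then d else 0].

Section SK.
Variables (G : groupoid) (A : pzRingType) (o : mor G -> A) (al : mor G -> A -> A).
Hypothesis P : unital_partial_action o al.
Implicit Types g h k m : mor G.
Local Notation I g x := (in_ideal (o g) x).
Local Notation mul := (skew_mul al).
Local Notation emb := (skew_emb o).
Local Notation al0 := (al0 P).

Lemma single0 k : single k (0 : A) = 0.
Proof. by apply/ffunP => k'; rewrite !ffunE; case: ifP. Qed.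

Lemma single_inS k d : I k d -> in_skew o (single k d).
Proof. by move=> Id k'; rewrite /in_ideal ffunE; case: eqP => [->|_] //; rewrite mul0r. Qed.

Lemma emb_inS r : in_skew o (emb r).
Proof. by move=> g; rewrite /in_ideal ffunE; case: ifP => _; [rewrite -mulrA (oo P) | rewrite mul0r]. Qed.

Lemma coord_id f f' j : (mul f f') (idm j) =
  \sum_(g | tgt g == j) al g (al (inv g) (f g) * f' (inv g)).
Proof.
rewrite ffunE [RHS]big_mkcond; apply: eq_bigr => g _.
rewrite (eq_bigl (fun h => (h == inv g) && (tgt g == j))); last first.
  move=> h /=; have [E|NE] := eqVneq (src g) (tgt h); first by rewrite /= comp_idm_eq.
  rewrite /=; case: eqP => // Eh; subst h; by rewrite tgt_inv eqxx in NE.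
case: (tgt g == j); first by rewrite (eq_bigl (fun h => h == inv g)) ?big_pred1_eq // => h; rewrite andbT.
by rewrite big_pred0 // => h; rewrite andbF.
Qed.

Lemma mul_single_r f g d : mul f (single g d) =
  \sum_(h | src h == tgt g) single (comp h g) (al h (al (inv h) (f h) * d)).
Proof.
apply/ffunP => k; rewrite ffunE sum_ffunE [RHS]big_mkcond; apply: eq_bigr => h _.
rewrite big_mkcond (sum_only (i0 := g)) /=; last first.
  by move=> h' ne; rewrite ffunE (negbTE ne) mulr0 al0; case: ifP.
rewrite !ffunE eqxx; case: (src h == tgt g) => //=; rewrite eq_sym; by case: ifP.
Qed.

Lemma mul_single_l g d f : mul (single g d) f =
  \sum_(h | src g == tgt h) single (comp g h) (al g (al (inv g) d * f h)).
Proof.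
apply/ffunP => k; rewrite ffunE sum_ffunE (sum_only (i0 := g)); last first.
  by move=> g' ne; apply: big1 => h _; rewrite ffunE (negbTE ne) al0 mul0r al0.
rewrite ffunE eqxx big_mkcondr; apply: eq_bigr => h _; by rewrite ffunE eq_sym.
Qed.

Lemma mul_single_single g c h d : mul (single g c) (single h d) =
  if src g == tgt h then single (comp g h) (al g (al (inv g) c * d)) else 0.
Proof.
rewrite mul_single_l big_mkcond (sum_only (i0 := h)) /=; last first.
  by move=> h' ne; rewrite ffunE (negbTE ne) mulr0 al0 single0; case: ifP.
by rewrite ffunE eqxx.
Qed.

Lemma mul_emb_r f r k : (mul f (emb r)) k = al k (al (inv k) (f k) * (r * o (idm (src k)))).
Proof.
rewrite ffunE (sum_only (i0 := k)); last first.
  move=> g ne; apply: big1 => h /andP[/eqP sgh /eqP cgh]; rewrite ffunE.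
  case: ifP => [/eqP hid|_]; last by rewrite mulr0 al0.
  have th : tgt h = src h by rewrite {1}hid tgt_idm.
  by move: ne; rewrite -cgh hid -th -sgh comp_idr eqxx.
rewrite big_mkcond (sum_only (i0 := idm (src k))) /=; last first.
  move=> h ne; case: ifP => // /andP[/eqP skh _]; rewrite ffunE.
  case: ifP => [/eqP hid|_]; last by rewrite mulr0 al0.
  have th : tgt h = src h by rewrite {1}hid tgt_idm.
  by move: ne; rewrite hid -th -skh eqxx.
by rewrite tgt_idm eqxx comp_idr eqxx /= ffunE src_idm eqxx.
Qed.

Lemma mul_emb_l r f k : (mul (emb r) f) k = al (idm (tgt k)) (r * o (idm (tgt k)) * f k).
Proof.
rewrite ffunE (sum_only (i0 := idm (tgt k))); last first.
  move=> g ne; apply: big1 => h /andP[/eqP sgh /eqP cgh]; rewrite ffunE.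
  case: ifP => [/eqP gid|_]; last by rewrite al0 mul0r al0.
  move: ne cgh; rewrite gid sgh comp_idl => ne hk; by rewrite hk eqxx in ne.
rewrite ffunE src_idm eqxx inv_idm (al_id P); last by apply: I_mulr; apply: (I_o P).
rewrite big_mkcond (sum_only (i0 := k)) /=; last first.
  move=> h ne; case: ifP => // /andP[/eqP skh /eqP chk].
  by move: ne chk; rewrite skh comp_idl => ne hk; rewrite hk eqxx in ne.
by rewrite eqxx comp_idl eqxx.
Qed.

Lemma mul_emb_l' r (f : {ffun mor G -> A}) k : I k (f k) -> (mul (emb r) f) k = r * f k.
Proof.
move=> Ik; rewrite mul_emb_l (al_id P); last by apply: I_mulr; apply: (I_sub P).
by rewrite -mulrA (oC P) (I_sub P Ik).
Qed.

Lemma mul_emb_r_id (f : {ffun mor G -> A}) r e : I (idm e) (f (idm e)) ->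
  (mul f (emb r)) (idm e) = f (idm e) * r * o (idm e).
Proof.
move=> Ie; rewrite mul_emb_r inv_idm src_idm !(al_id P) ?mulrA //.
by apply: I_mulr; apply: (I_o P).
Qed.

End SK.

Lemma sum_enum (R : nmodType) (T : finType) (F : T -> R) :
  \sum_(k < #|T|) F (enum_val k) = \sum_t F t.
Proof. by rewrite -big_enum_val; apply: eq_bigl => t; rewrite ?inE. Qed.

Lemma comp_right_id (G : groupoid) (h k : mor G) : src h = tgt k -> comp h k = k -> h = idm (tgt k).
Proof.
move=> shk E.
rewrite -[LHS]comp_idr shk -comp_invr comp_assoc ?E ?tgt_inv //.
Qed.

Section Main.
Variables (G : groupoid) (A : pzRingType) (o : mor G -> A) (al : mor G -> A -> A).
Hypothesis P : unital_partial_action o al.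
Implicit Types g h k m : mor G.
Local Notation I g x := (in_ideal (o g) x).
Local Notation mul := (skew_mul al).
Local Notation emb := (skew_emb o).
Local Notation inS := (in_skew o).
Local Notation FF := {ffun mor G -> A}.

Lemma inS_0 : inS 0.
Proof. by move=> g; rewrite /in_ideal ffunE mul0r. Qed.
Lemma inS_add u v : inS u -> inS v -> inS (u + v).
Proof. by move=> Iu Iv g; rewrite /in_ideal ffunE mulrDl Iu Iv. Qed.

Lemma phi_suml (M : zmodType) (phi : FF -> FF -> M) (J : finType) (Q : pred J) (F : J -> FF) v :
 (forall u u' w, inS u -> inS u' -> inS w -> phi (u + u') w = phi u w + phi u' w) ->
 (forall i, Q i -> inS (F i)) -> inS v ->
 phi (\sum_(i | Q i) F i) v = \sum_(i | Q i) phi (F i) v.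
Proof.
move=> Hadd HF Iv.
have phi0 : phi 0 v = 0.
  have := Hadd 0 0 v inS_0 inS_0 Iv; rewrite addr0 => E.
  have : phi 0 v + phi 0 v - phi 0 v = phi 0 v - phi 0 v by rewrite -E.
  by rewrite addrK subrr.
suff : inS (\sum_(i | Q i) F i) /\ phi (\sum_(i | Q i) F i) v = \sum_(i | Q i) phi (F i) v by case.
elim/big_rec2: _ => [|i y1 y2 Qi [Iy E]]; first by split => //; apply: inS_0.
split; first by apply: inS_add => //; apply: HF.
by rewrite Hadd ?E //; apply: HF.
Qed.

Lemma phi_sumr (M : zmodType) (phi : FF -> FF -> M) (J : finType) (Q : pred J) (F : J -> FF) u :
 (forall u v w, inS u -> inS v -> inS w -> phi u (v + w) = phi u v + phi u w) ->
 (forall i, Q i -> inS (F i)) -> inS u ->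
 phi u (\sum_(i | Q i) F i) = \sum_(i | Q i) phi u (F i).
Proof.
move=> Hadd HF Iu.
have phi0 : phi u 0 = 0.
  have := Hadd u 0 0 Iu inS_0 inS_0; rewrite addr0 => E.
  have : phi u 0 + phi u 0 - phi u 0 = phi u 0 - phi u 0 by rewrite -E.
  by rewrite addrK subrr.
suff : inS (\sum_(i | Q i) F i) /\ phi u (\sum_(i | Q i) F i) = \sum_(i | Q i) phi u (F i) by case.
elim/big_rec2: _ => [|i y1 y2 Qi [Iy E]]; first by split => //; apply: inS_0.
split; first by apply: inS_add => //; apply: HF.
by rewrite Hadd ?E //; apply: HF.
Qed.

Lemma single_mul_emb m c r : mul (single m c) (emb r) =
  single m (al m (al (inv m) c * (r * o (idm (src m))))).
Proof.
apply/ffunP => k; rewrite mul_emb_r // !ffunE.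
by case: eqP => [->|_] //; rewrite (al0 P) mul0r (al0 P).
Qed.

Lemma emb_mul_single r k d : I k d -> mul (emb r) (single k d) = single k (r * d).
Proof.
move=> Id; apply/ffunP => k'; rewrite mul_emb_l' //; last by apply: single_inS.
by rewrite !ffunE; case: eqP => _ //; rewrite mulr0.
Qed.

End Main.

Section Dir1.
Variables (G : groupoid) (A : pzRingType) (o : mor G -> A) (al : mor G -> A -> A).
Hypothesis P : unital_partial_action o al.
Hypothesis orth : forall e f : obj G, e <> f -> o (idm e) * o (idm f) = 0.
Implicit Types g h k m : mor G.
Local Notation I g x := (in_ideal (o g) x).
Local Notation mul := (skew_mul al).
Local Notation emb := (skew_emb o).
Local Notation inS := (in_skew o).
Local Notation FF := {ffun mor G -> A}.

Lemma dir1 : separable_ext inS mul (emb 1) (fun r => exists a : A, r = emb a) ->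
   exists a : A, (forall b : A, a * b = b * a) /\
     forall j : obj G, trace_t o al j a = o (idm j).
Proof.
case=> n [x [y [inxy mxy cen]]].
have Ix (k : 'I_n) g : I g (x k g) by exact: (inxy k).1.
have Iy (k : 'I_n) g : I g (y k g) by exact: (inxy k).2.
pose a := \sum_(k < n) \sum_(e : obj G) x k (idm e) * y k (idm e).
exists a; split.
  move=> b.
  pose phi0 := fun u v : FF => \sum_(e : obj G) u (idm e) * v (idm e).
  have bal : balanced inS mul (fun r => exists a : A, r = emb a) phi0.
    split.
    - by move=> u v w _ _ _; rewrite -big_split; apply: eq_bigr => e _; rewrite ffunE mulrDl.
    - by move=> u v w _ _ _; rewrite -big_split; apply: eq_bigr => e _; rewrite ffunE mulrDr.
    - move=> u r v Iu [c ->] Iv; apply: eq_bigr => e _.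
      rewrite mul_emb_r_id // mul_emb_l' // -!mulrA; congr (_ * (_ * _)).
      by rewrite (oC P) (Iv (idm e)).
  have := cen (emb b) (emb_inS P b) A phi0 bal.
  rewrite /phi0 => E.
  rewrite /a mulr_suml mulr_sumr; symmetry.
  transitivity (\sum_(k < n) \sum_e mul (emb b) (x k) (idm e) * y k (idm e)).
    apply: eq_bigr => k _; rewrite mulr_sumr; apply: eq_bigr => e _.
    by rewrite mul_emb_l' // mulrA.
  rewrite E; apply: eq_bigr => k _; rewrite mulr_suml; apply: eq_bigr => e _.
  rewrite mul_emb_r_id // -!mulrA; congr (_ * _).
  by rewrite -(oC P) mulrA (Iy k (idm e)).
move=> j.
have oj : o (idm j) = \sum_(k < n) \sum_(g | tgt g == j) al g (al (inv g) (x k g) * y k (inv g)).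
  have := congr1 (fun f : FF => f (idm j)) mxy; rewrite /= sum_ffunE ffunE src_idm eqxx mul1r => <-.
  by apply: eq_bigr => k _; rewrite coord_id.
rewrite oj exchange_big /trace_t; apply: eq_bigr => g /eqP tg.
rewrite -(al_sum P); last first.
  move=> k _; apply: (I_mull P); apply: (al_into P); rewrite inv_inv; exact: Ix.
congr (al g _).
pose phi := fun u v : FF => u (idm (src g)) * v (inv g).
have bal : balanced inS mul (fun r => exists a : A, r = emb a) phi.
  split; first by move=> u v w _ _ _; rewrite /phi ffunE mulrDl.
    by move=> u v w _ _ _; rewrite /phi ffunE mulrDr.
  move=> u r v Iu [c ->] Iv; rewrite /phi mul_emb_r_id // mul_emb_l' // -!mulrA; congr (_ * (_ * _)).
  by have := I_sub P (Iv (inv g)); rewrite tgt_inv => H; rewrite (oC P) H.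
set s := single (inv g) (o (inv g)).
have Is : inS s by apply: single_inS; apply: (I_o P).
have := cen s Is A phi bal; rewrite /phi => E.
have L : \sum_(k < n) al (inv g) (x k g) * y k (inv g) = \sum_(k < n) mul s (x k) (idm (src g)) * y k (inv g).
  apply: eq_bigr => k _; congr (_ * _).
  rewrite coord_id big_mkcond (sum_only (i0 := inv g)) /=; last first.
    by move=> h ne; rewrite ffunE (negbTE ne) (al0 P) mul0r (al0 P); case: ifP.
  by rewrite tgt_inv eqxx ffunE eqxx inv_inv (upa_one P) (oC P) (Ix k g).
rewrite L E /a mulr_suml; apply: eq_bigr => k _.
rewrite mulr_suml (sum_only (i0 := src g)); last first.
  move=> e' ne.
  rewrite -(Iy k (idm e')) -[o (inv g)](upa_sub P (inv g)) tgt_inv -!mulrA.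
  rewrite [o (inv g) * _](oC P) [o (idm e') * _]mulrA orth ?mul0r ?mulr0 //.
  by apply/eqP.
rewrite -mulrA; congr (_ * _).
rewrite (mul_single_r P) sum_ffunE big_mkcond (sum_only (i0 := idm (src g))) /=; last first.
  move=> h ne; case: ifP => // /eqP shg; rewrite ffunE; case: eqP => // E'.
  have := comp_right_id shg (esym E'); rewrite tgt_inv => hE.
  by rewrite hE eqxx in ne.
have ci : comp (idm (src g)) (inv g) = inv g by rewrite -{1}(tgt_inv g) comp_idl.
rewrite src_idm tgt_inv eqxx ffunE ci eqxx inv_idm (al_id P) ?(al_id P) //.
by apply: (I_mull P).
Qed.

End Dir1.

Section Dir2.
Variables (G : groupoid) (A : pzRingType) (o : mor G -> A) (al : mor G -> A -> A).
Hypothesis P : unital_partial_action o al.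
Implicit Types g h k m : mor G.
Local Notation I g x := (in_ideal (o g) x).
Local Notation mul := (skew_mul al).
Local Notation emb := (skew_emb o).
Local Notation inS := (in_skew o).
Local Notation FF := {ffun mor G -> A}.

Lemma dir2 (a : A) : (forall b : A, a * b = b * a) ->
  (forall j : obj G, trace_t o al j a = o (idm j)) ->
  separable_ext inS mul (emb 1) (fun r => exists a : A, r = emb a).
Proof.
move=> ac tr.
pose c g := al g (a * o (inv g)).
have Ia g : I (inv g) (a * o (inv g)) by apply: I_mulr; apply: (I_o P).
have Ic g : I g (c g) by apply: (al_into P).
pose X g := single g (c g).
pose Y g := single (inv g) (o (inv g)).
exists #|mor G|, (fun i => X (enum_val i)), (fun i => Y (enum_val i)); split.
- move=> i; split; apply: single_inS => //; apply: (I_o P).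
- have -> : \sum_(i < #|mor G|) mul (X (enum_val i)) (Y (enum_val i)) = \sum_g mul (X g) (Y g).
    exact: (sum_enum (fun g => mul (X g) (Y g))).
  have XY g : mul (X g) (Y g) = single (idm (tgt g)) (c g).
    rewrite /X /Y (mul_single_single P) tgt_inv eqxx comp_invr (al_inv P) //.
    by rewrite -mulrA (oo P).
  rewrite (eq_bigr _ (fun g _ => XY g)).
  apply/ffunP => k; rewrite sum_ffunE ffunE.
  case: (eqVneq k (idm (src k))) => [ke|nk].
    rewrite ke mul1r -tr /trace_t [RHS]big_mkcond; apply: eq_bigr => g _.
    by rewrite ffunE (inj_eq (@idm_inj G)) eq_sym; case: ifP.
  rewrite big1 // => g _; rewrite ffunE; case: eqP => // E.
  by move: nk; rewrite E src_idm eqxx.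
move=> s Is M phi [phiD1 phiD2 phiB].
have -> : \sum_(i < #|mor G|) phi (mul s (X (enum_val i))) (Y (enum_val i)) = \sum_g phi (mul s (X g)) (Y g).
  exact: (sum_enum (fun g => phi (mul s (X g)) (Y g))).
have -> : \sum_(i < #|mor G|) phi (X (enum_val i)) (mul (Y (enum_val i)) s) = \sum_g phi (X g) (mul (Y g) s).
  exact: (sum_enum (fun g => phi (X g) (mul (Y g) s))).
have Lg g : phi (mul s (X g)) (Y g) =
    \sum_(h | src h == tgt g) phi (single (comp h g) (al h (al (inv h) (s h) * c g))) (Y g).
  rewrite /X (mul_single_r P) (phi_suml phiD1) //; last by apply: single_inS; apply: (I_o P).
  move=> h /eqP shg; apply: single_inS; apply: (al_in P) => //.
    apply: (I_mull P); apply: (al_into P); rewrite inv_inv; exact: Is.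
  by apply: I_mulr.
have Rg g : phi (X g) (mul (Y g) s) =
    \sum_(h | tgt g == tgt h) phi (X g) (single (comp (inv g) h) (al (inv g) (o g * s h))).
  rewrite /Y (mul_single_l P) src_inv inv_inv (upa_one P) (phi_sumr phiD2) //; last first.
    exact: single_inS.
  move=> h /eqP th; apply: single_inS; apply: (al_in P); first by rewrite src_inv.
    rewrite inv_inv; apply: (I_mull P); apply: (I_o P).
  by apply: I_mulr; exact: Is.
rewrite (eq_bigr _ (fun g _ => Lg g)) (eq_bigr _ (fun g _ => Rg g)).
rewrite (exchange_big_dep predT) //= [RHS](exchange_big_dep predT) //=.
apply: eq_bigr => h _.
rewrite (reindex_onto (fun m => comp (inv h) m) (fun g => comp h g)) /=; last first.
  by move=> g /eqP shg; rewrite comp_cancel_l.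
rewrite (eq_bigl (fun m => tgt m == tgt h)); last first.
  move=> m /=; apply/andP/eqP => [[/eqP E1 /eqP E2]|tm].
    by rewrite -E2 tgt_comp // E1.
  split; apply/eqP; last by rewrite comp_cancel_l'.
  by rewrite tgt_comp ?tgt_inv // src_inv tm.
rewrite [RHS](eq_bigl (fun m => tgt m == tgt h)); last by move=> m /=; rewrite eq_sym.
apply: eq_bigr => m /eqP tm.
set g := comp (inv h) m.
have sg : src (inv h) = tgt m by rewrite src_inv tm.
have Em : comp h g = m by rewrite comp_cancel_l'.
have Eg : inv g = comp (inv m) h by rewrite /g inv_comp // inv_inv.
set k := comp (inv m) h.
have sk : src (inv m) = tgt h by rewrite src_inv tm.
rewrite Em /Y Eg /X.
set D := al (inv m) (o m * s h).
have ID1 : I (inv m) D.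
  by apply: (al_into P); rewrite inv_inv; apply: (I_mull P); apply: (I_o P).
have ID2 : I k D.
  apply: (al_in P) => //; first by rewrite inv_inv; apply: (I_mull P); apply: (I_o P).
  by apply: I_mulr; exact: Is.
have -> : single k D = mul (emb D) (single k (o k)).
  by rewrite (emb_mul_single P) ?ID2 //; apply: (I_o P).
rewrite -phiB; first last.
- by apply: single_inS; apply: (I_o P).
- by exists D.
- exact: single_inS.
rewrite (single_mul_emb P); congr (phi (single m _) _).
have Do : D * o (idm (src m)) = D by have := I_sub P ID1; rewrite tgt_inv.
have amD : al m D = o m * s h by rewrite (al_inv' P) //; apply: (I_mull P); apply: (I_o P).
rewrite (al_inv P); last first.
  exact: (Ia m).
rewrite Do (@al_mul _ _ _ _ P m); try exact: (Ia m); try exact: ID1.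
change (al m (a * o (inv m))) with (c m).
have IX : I (inv h) (al (inv h) (s h)) by apply: (al_into P); rewrite inv_inv; exact: Is.
have sgm : src g = tgt (inv m) by rewrite /g src_comp // tgt_inv.
have cgi : comp g (inv m) = inv h.
  rewrite /g -comp_assoc ?src_inv ?tgt_inv // comp_invr -sg comp_idr //.
have key1 : o g * o (inv h) = al g (o k * o (inv m)).
  by rewrite /k -Eg (key P sgm) cgi.
have Y' : c g * o (inv h) = al g (a * o k * o (inv m)).
  rewrite -(Ic g) -mulrA key1 /c Eg -(al_mul P); first last.
  - by rewrite Eg; apply: (I_mull P); apply: (I_o P).
  - by rewrite Eg; apply: I_mulr; apply: (I_o P).
  by rewrite mulrA -[a * o k * o k]mulrA (oo P).
have -> : al (inv h) (s h) * c g = al (inv h) (s h) * (c g * o (inv h)).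
  by rewrite -{1}IX -mulrA (oC P (inv h) (c g)).
have shg : src h = tgt g by rewrite /g tgt_comp // tgt_inv.
have Iw : I (inv g) (a * o k * o (inv m)).
  by rewrite Eg; apply: (I_mull P); apply: I_mulr; apply: (I_o P).
have Iaw : I (inv h) (al g (a * o k * o (inv m))) by rewrite -Y'; apply: I_mulr; apply: (I_o P).
rewrite Y' (al_mul P) // (al_inv' P) //.
have [_ ->] := upa_comp P shg Iw Iaw.
rewrite Em.
have wE : a * o k * o (inv m) = a * o (inv m) * (o (inv m) * o k).
  by rewrite mulrA -[a * o (inv m) * o (inv m)]mulrA (oo P) -!mulrA (oC P k).
have smk : src m = tgt k by rewrite /k tgt_comp // tgt_inv.
rewrite wE (al_mul P) //; last by apply: (I_oo P).
rewrite (key P smk) /k comp_cancel_l' //.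
change (al m (a * o (inv m))) with (c m).
rewrite [c m * (o m * o h)]mulrA (Ic m) -(oC P h (c m)) mulrA (Is h).
have -> : c m * al m D = al m D * c m.
  rewrite /c -!(al_mul P); try exact: (Ia m); try exact: ID1.
  congr (al m _).
  have aD : a * o (inv m) * D = a * D by rewrite -mulrA (oC P) ID1.
  by rewrite aD mulrA -ac -mulrA ID1.
by rewrite amD (oC P m) -mulrA (oC P m (c m)) (Ic m).
Qed.

End Dir2.

Unset Implicit Arguments.

Theorem theorem3p2 (G : groupoid) (A : pzRingType)
  (one_ : mor G -> A) (alpha : mor G -> A -> A) :
  connected G ->
  (* A = (+)_i A_{e_i}: the 1_{e_i} are orthogonal and sum to 1 *)
  \sum_(e : obj G) one_ (idm e) = 1 ->
  (forall e f : obj G, e <> f -> one_ (idm e) * one_ (idm f) = 0) ->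
  unital_partial_action one_ alpha ->
  (separable_ext (in_skew one_) (skew_mul alpha) (skew_emb one_ 1)
      (fun r => exists a : A, r = skew_emb one_ a)
   <->
   exists a : A, (forall b : A, a * b = b * a) /\
     forall j : obj G, trace_t one_ alpha j a = one_ (idm j)).
Proof.
move=> _ _ orth P; split; first exact: (dir1 P orth).
by case=> a [ac tr]; exact: (dir2 P ac tr).
Qed.
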